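(* Let $\mathbb{K}$ be a field and let $\Delta$ be a $d$-dimensional simplicial complex on vertex set $[n]$ whose $d$-dimensional facets are $F_1,\dots,F_s$ (it may have further facets of smaller dimension). Assume $\tilde H_d(\Delta;\mathbb{K})\neq 0$ and let $F=c_1F_1+\dots+c_sF_s$ ($c_i\in\mathbb{K}$) be a nonzero element of $\tilde H_d(\Delta;\mathbb{K})$. Put $$F_\Delta=c_1x_{F_1}V(F_1)+\dots+c_sx_{F_s}V(F_s)=c_1\sum_{\sigma\in S^{F_1}}\operatorname{sign}(\sigma)\,x^{\mu}_{\sigma(F_1)}+\dots+c_s\sum_{\sigma\in S^{F_s}}\operatorname{sign}(\sigma)\,x^{\mu}_{\sigma(F_s)},$$ where $\mu=(d+1,d,\dots,1)$. Then $F_\Delta$ (viewed in $S$ via $x_i\mapsto y_i$) is a $\binom{d+2}{2}$-coinvariant stress of $\Delta$, i.e. $F_\Delta\in\big(I_\Delta+(e_1,\dots,e_{d+1})\big)^{-1}_{-\binom{d+2}{2}}$. In particular $\dim_{\mathbb{K}}\big(I_\Delta+(e_1,\dots,e_{d+1})\big)^{-1}_{-\binom{d+2}{2}}>0$.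
   Context: $R=\mathbb{K}[x_1,\dots,x_n]$ with $\deg x_i=1$; $S=\mathbb{K}[y_1,\dots,y_n]$ with $\deg y_i=-1$, made into an $R$-module by contraction: $x^a\circ y^b=y^{b-a}$ if $b_i\ge a_i$ for all $i$ and $0$ otherwise, extended linearly. For an ideal $I\subset R$, its inverse system is $I^{-1}=\{G\in S: g\circ G=0 \text{ for all } g\in I\}$, and $I^{-1}_{-k}$ is its degree $-k$ part. Polynomials in $R$ are identified with polynomials in $S$ via $x_i\leftrightarrow y_i$. $I_\Delta=(x_\tau:\tau\subseteq[n],\ \tau\notin\Delta)$ is the Stanley–Reisner ideal, where $x_\tau=\prod_{i\in\tau}x_i$. $e_k=\sum_{j_1<\dots<j_k}x_{j_1}\cdots x_{j_k}$ is the $k$-th elementary symmetric polynomial in $x_1,\dots,x_n$. The space of $k$-coinvariant stresses of $\Delta$ is $(I_\Delta+(e_1,\dots,e_{d+1}))^{-1}_{-k}$. For $B=\{i_1<\dots<i_m\}\subseteq[n]$, $V(B)=\prod_{j<k}(x_{i_j}-x_{i_k})$ is the Vandermonde determinant. Simplicial homology is computed with faces oriented by increasing vertex order. $S^{F}$ is the symmetric group on the elements of $F$; for $F=\{i_1<\dots<i_{d+1}\}$ and $\sigma\in S^F$, $x^{\mu}_{\sigma(F)}=\prod_{j=1}^{d+1}x_{\sigma(i_j)}^{\mu_j}$. *)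

(* Defs.v *)
From HB Require Import structures.
From mathcomp Require Import all_boot all_order all_algebra.
From mathcomp Require Import mpoly.
Set Implicit Arguments. Unset Strict Implicit. Unset Printing Implicit Defensive.
Import GRing.Theory.
Local Open Scope ring_scope.

Section Defs.
Variables (K : fieldType) (n : nat).

Definition simplicial_complex (D : {set {set 'I_n}}) : Prop :=
  [/\ set0 \in D,
      (forall G H : {set 'I_n}, G \in D -> H \subset G -> H \in D) &
      (forall i : 'I_n, [set i] \in D)].

Definition has_dim (D : {set {set 'I_n}}) (d : nat) : Prop :=
  (exists2 G, G \in D & #|G| = d.+1) /\ (forall G, G \in D -> #|G| <= d.+1)%N.

Definition is_chain (D : {set {set 'I_n}}) (k : nat) (c : {set 'I_n} -> K) : Prop :=
  forall G, c G != 0 -> G \in D /\ #|G| = k.+1.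

(* Simplicial boundary with faces oriented by increasing vertex order,
   evaluated at a set tau (of size k, i.e. a (k-1)-face):
   d(c)(tau) = sum over v notin tau with tau+v in D of
               (-1)^(position of v in tau+v) c(tau+v).
   For k = 0 (tau = empty set) this is the augmentation, giving reduced
   homology. *)
Definition boundary (D : {set {set 'I_n}}) (c : {set 'I_n} -> K)
    (tau : {set 'I_n}) : K :=
  \sum_(v : 'I_n | (v \notin tau) && ((v |: tau) \in D))
     (-1) ^+ #|[set u in tau | (u < v)%N]| * c (v |: tau).

Definition is_cycle (D : {set {set 'I_n}}) (k : nat) (c : {set 'I_n} -> K) : Prop :=
  is_chain D k c /\
  (forall tau, tau \in D -> #|tau| = k -> boundary D c tau = 0).

Definition is_boundary (D : {set {set 'I_n}}) (k : nat) (c : {set 'I_n} -> K) : Prop :=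
  exists2 b, is_chain D k.+1 b &
    forall G, G \in D -> #|G| = k.+1 -> c G = boundary D b G.

Definition nonzero_homology_class (D : {set {set 'I_n}}) (k : nat)
    (c : {set 'I_n} -> K) : Prop :=
  is_cycle D k c /\ ~ is_boundary D k c.

Definition xset (tau : {set 'I_n}) : {mpoly K[n]} := \prod_(i in tau) 'X_i.

Definition vandermonde (B : {set 'I_n}) : {mpoly K[n]} :=
  \prod_(i in B) \prod_(j in B | (i < j)%N) ('X_i - 'X_j).

Definition F_Delta (D : {set {set 'I_n}}) (d : nat) (c : {set 'I_n} -> K)
    : {mpoly K[n]} :=
  \sum_(G in D | #|G| == d.+1) c G *: (xset G * vandermonde G).

(* Contraction action of R on S; elements of S are represented by
   polynomials in {mpoly K[n]} via y_i <-> x_i.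
   x^a o y^b = y^(b-a) if a <= b componentwise, 0 otherwise. *)
Definition contract_mon (a : 'X_{1..n}) (G : {mpoly K[n]}) : {mpoly K[n]} :=
  \sum_(b <- msupp G) (if lem a b then G@_b *: 'X_[mnm_sub b a] else 0).

Definition contract (g G : {mpoly K[n]}) : {mpoly K[n]} :=
  \sum_(a <- msupp g) g@_a *: contract_mon a G.

Definition in_ideal (gens : {mpoly K[n]} -> Prop) (g : {mpoly K[n]}) : Prop :=
  exists s : seq ({mpoly K[n]} * {mpoly K[n]}),
    (forall p, p \in s -> gens p.2) /\ g = \sum_(p <- s) p.1 * p.2.

Definition coinv_gens (D : {set {set 'I_n}}) (d : nat) (g : {mpoly K[n]}) : Prop :=
  (exists2 tau : {set 'I_n}, tau \notin D & g = xset tau) \/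
  (exists2 k : nat, (1 <= k <= d.+1)%N & g = mesym n K k).

(* G lies in the degree -k part of S (in x-variables: homogeneous of degree k;
   the zero polynomial is included) *)
Definition homog_deg (k : nat) (G : {mpoly K[n]}) : Prop :=
  forall m, m \in msupp G -> mdeg m = k.

Definition coinvariant_stress (D : {set {set 'I_n}}) (d k : nat)
    (G : {mpoly K[n]}) : Prop :=
  homog_deg k G /\
  (forall g, in_ideal (coinv_gens D d) g -> contract g G = 0).

End Defs.

(* Main.v *)
Require Import Defs.
From HB Require Import structures.
From mathcomp Require Import all_boot all_order all_algebra zify.
From mathcomp Require Import mpoly.
From mathcomp.multinomials Require Import ssrcomplements.
Set Implicit Arguments. Unset Strict Implicit. Unset Printing Implicit Defensive.
Import GRing.Theory.
Local Open Scope ring_scope.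

Section Contract.
Variables (K : fieldType) (n : nat).
Implicit Types (g G P Q p q : {mpoly K[n]}) (a b m : 'X_{1..n}).

Lemma coef_contract_mon a G m : (contract_mon a G)@_m = G@_(m + a).
Proof.
rewrite /contract_mon raddf_sum /=.
have E b : (if lem a b then G@_b *: 'X_[(b - a)%MM] else 0)@_m
           = G@_b * (b == (m + a)%MM)%:R.
  case: ifP => hab.
    rewrite mcoeffZ mcoeffX.
    have -> : ((b - a)%MM == m) = (b == (m + a)%MM) :> bool.
      apply/idP/idP => /eqP H; apply/eqP; first by rewrite -H submK.
      by rewrite H addmK.
    by [].
  rewrite raddf0; case: eqP => [e|]; last by rewrite mulr0.
  by move: hab; rewrite e lem_addl.
rewrite (eq_bigr _ (fun b _ => E b)).
have [hin|hnin] := boolP ((m + a)%MM \in msupp G).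
  rewrite (bigD1_seq (m + a)%MM) ?msupp_uniq //= eqxx mulr1 big1 ?addr0 //.
  by move=> b /negbTE ->; rewrite mulr0.
rewrite memN_msupp_eq0 // big_seq big1 // => b bin.
case: eqP => [e|]; last by rewrite mulr0.
by move: hnin; rewrite -e bin.
Qed.

Lemma coef_contract g G m :
  (contract g G)@_m = \sum_(a <- msupp g) g@_a * G@_(m + a).
Proof.
rewrite /contract raddf_sum /=; apply: eq_bigr => a _.
by rewrite mcoeffZ coef_contract_mon.
Qed.

Definition Lf (f : 'X_{1..n} -> K) g := \sum_(a <- msupp g) g@_a * f a.

Lemma LfE f g k : (msize g <= k)%N ->
  Lf f g = \sum_(a : 'X_{1..n < k}) g@_a * f a.
Proof.
move=> le_pi; set I : subFinType _ := 'X_{1..n < k}.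
rewrite /Lf (big_mksub I) ?msupp_uniq //=; first last.
  by move=> x /msize_mdeg_lt /leq_trans; apply.
rewrite big_rmcond //= => j /memN_msupp_eq0 ->.
by rewrite mul0r.
Qed.

Lemma LfD f g1 g2 : Lf f (g1 + g2) = Lf f g1 + Lf f g2.
Proof.
set k := maxn (msize g1) (msize g2).
have h1 : (msize g1 <= k)%N by rewrite leq_maxl.
have h2 : (msize g2 <= k)%N by rewrite leq_maxr.
have h3 : (msize (g1 + g2) <= k)%N by apply: leq_trans (msizeD_le _ _) _.
rewrite !(LfE f h1, LfE f h2, LfE f h3) -big_split /=.
by apply: eq_bigr => i _; rewrite mcoeffD mulrDl.
Qed.

Lemma Lf0 f : Lf f 0 = 0.
Proof. by rewrite /Lf msupp0 big_nil. Qed.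

Lemma Lf_sum f I (r : seq I) (P : pred I) (F : I -> {mpoly K[n]}) :
  Lf f (\sum_(i <- r | P i) F i) = \sum_(i <- r | P i) Lf f (F i).
Proof. exact: (big_morph _ (LfD f) (Lf0 f)). Qed.

Lemma LfZX f c m : Lf f (c *: 'X_[m]) = c * f m.
Proof.
have [->|nz] := eqVneq c 0; first by rewrite scale0r Lf0 mul0r.
by rewrite /Lf (perm_big _ (msuppZ _ nz)) msuppX big_seq1 mcoeffZ mcoeffX eqxx mulr1.
Qed.

Lemma LfM f p q :
  Lf f (p * q) = \sum_(a <- msupp p) p@_a * \sum_(b <- msupp q) q@_b * f (a + b)%MM.
Proof.
rewrite mpolyME Lf_sum big_allpairs_dep /=.
apply: eq_bigr => a _; rewrite mulr_sumr; apply: eq_bigr => b _.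
by rewrite LfZX mulrA.
Qed.

Lemma contractE g G m : (contract g G)@_m = Lf (fun a => G@_(m + a)) g.
Proof. by rewrite coef_contract. Qed.

Lemma contractDl g1 g2 G : contract (g1 + g2) G = contract g1 G + contract g2 G.
Proof. by apply/mpolyP => m; rewrite mcoeffD !contractE LfD. Qed.

Lemma contract0l G : contract 0 G = 0.
Proof. by rewrite /contract msupp0 big_nil. Qed.

Lemma contract_suml I (r : seq I) (P : pred I) (F : I -> {mpoly K[n]}) G :
  contract (\sum_(i <- r | P i) F i) G = \sum_(i <- r | P i) contract (F i) G.
Proof. exact: (big_morph (fun g => contract g G) (fun x y => contractDl x y G) (contract0l G)). Qed.

Lemma contractDr g P Q : contract g (P + Q) = contract g P + contract g Q.
Proof.
apply/mpolyP => m; rewrite mcoeffD !coef_contract -big_split /=.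
by apply: eq_bigr => a _; rewrite mcoeffD mulrDr.
Qed.

Lemma contractZr g c P : contract g (c *: P) = c *: contract g P.
Proof.
apply/mpolyP => m; rewrite mcoeffZ !coef_contract mulr_sumr.
by apply: eq_bigr => a _; rewrite mcoeffZ mulrCA.
Qed.

Lemma contractr0 g : contract g 0 = 0.
Proof. by have := contractZr g 0 0; rewrite !scale0r. Qed.

Lemma contract_sumr g I (r : seq I) (P : pred I) (F : I -> {mpoly K[n]}) :
  contract g (\sum_(i <- r | P i) F i) = \sum_(i <- r | P i) contract g (F i).
Proof. exact: (big_morph (contract g) (contractDr g) (contractr0 g)). Qed.

Lemma contractM p q G : contract (p * q) G = contract p (contract q G).
Proof.
apply/mpolyP => m; rewrite contractE LfM coef_contract.
apply: eq_bigr => a _; congr (_ * _); rewrite coef_contract.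
by apply: eq_bigr => b _; rewrite addmA.
Qed.

Lemma contractX a G : contract 'X_[a] G = contract_mon a G.
Proof. by rewrite /contract msuppX big_seq1 mcoeffX eqxx scale1r. Qed.

Lemma contract_monXM a Q : contract_mon a ('X_[a] * Q) = Q.
Proof.
apply/mpolyP => m; rewrite coef_contract_mon mulrC addmC mcoeffMX //.
Qed.

Lemma contract_mon_vanish a P i :
  (forall b, b \in msupp P -> b i = 0%N) -> a i != 0%N -> contract_mon a P = 0.
Proof.
move=> hP hai; apply/mpolyP => m; rewrite coef_contract_mon raddf0.
apply: memN_msupp_eq0; apply/negP => /hP; rewrite mnmDE.
by move=> /eqP; rewrite addn_eq0 (negbTE hai) andbF.
Qed.

End Contract.

Section XsetContract.
Variables (K : fieldType) (n : nat).
Implicit Types (g G P Q p q : {mpoly K[n]}) (a b m : 'X_{1..n}).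

Definition nov (i : 'I_n) P := forall b, b \in msupp P -> b i = 0%N.

Lemma novM i P Q : nov i P -> nov i Q -> nov i (P * Q).
Proof.
move=> hP hQ b /msuppM_le /allpairsP [[b1 b2] /= [h1 h2 ->]].
by rewrite mnmDE hP // hQ.
Qed.

Lemma nov1 i : nov i 1.
Proof. by move=> b; rewrite msupp1 inE => /eqP ->; rewrite mnm0E. Qed.

Lemma novB i P Q : nov i P -> nov i Q -> nov i (P - Q).
Proof.
move=> hP hQ b /msuppB_le; rewrite mem_cat => /orP [/hP|/hQ] //.
Qed.

Lemma novX i j : j != i -> nov i ('X_j : {mpoly K[n]}).
Proof.
by move=> ne b; rewrite msuppX inE => /eqP ->; rewrite mnm1E (negbTE ne).
Qed.

Lemma nov_prod i I (r : seq I) (Pr : pred I) (F : I -> {mpoly K[n]}) :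
  (forall j, Pr j -> nov i (F j)) -> nov i (\prod_(j <- r | Pr j) F j).
Proof.
move=> h; elim/big_ind: _ => //; [exact: nov1 | exact: novM].
Qed.

Lemma xsetE (T : {set 'I_n}) : xset K T = 'X_[mesym1 T].
Proof.
rewrite /xset mprodXE; congr 'X_[_].
apply/mnmP=> i; rewrite mnmE mnm_sumE big_mkcond /=.
rewrite (bigD1 i) //= mnmE eqxx /= big1 ?addn0 // => j ne_ji.
by case: (_ \in _); rewrite // mnmE (negbTE ne_ji).
Qed.

Lemma nov_xV i (G0 : {set 'I_n}) : i \notin G0 ->
  nov i (xset K G0 * vandermonde K G0).
Proof.
move=> hi; have ne j : j \in G0 -> j != i by apply: contraTneq => ->.
apply: novM; first by apply: nov_prod => j /ne; apply: novX.
apply: nov_prod => j jG; apply: nov_prod => k /andP [kG _].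
by apply: novB; apply: novX; apply: ne.
Qed.

Lemma contract_xset (T G0 : {set 'I_n}) :
  contract (xset K T) (xset K G0 * vandermonde K G0) =
  if T \subset G0 then xset K (G0 :\: T) * vandermonde K G0 else 0.
Proof.
case: ifP => sub.
  rewrite {2}/xset (big_setID T) /= (setIidPr sub) -/(xset K T) -/(xset K _).
  by rewrite -mulrA xsetE contractX contract_monXM.
have [i iT iG] : exists2 i, i \in T & i \notin G0.
  by move/negbT: sub => /subsetPn [i] ? ?; exists i.
rewrite xsetE contractX; apply: (contract_mon_vanish (i := i)).
  exact: nov_xV.
by rewrite mnmE iT.
Qed.

End XsetContract.

Section Vander.
Variable R : comNzRingType.

Definition VO r (q : 'I_r -> R) := \prod_(i < r) \prod_(j < r | (i < j)%N) (q i - q j).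
Definition VO' r (q : 'I_r -> R) := \prod_(i < r) \prod_(j < r | (i < j)%N) (q j - q i).
Definition VS N (p : 'I_N -> R) (A : {set 'I_N}) :=
  \prod_(i in A) \prod_(j in A | (i < j)%N) (p i - p j).

Lemma VO_VO' r (q : 'I_r -> R) :
  VO q = (\prod_(i < r) \prod_(j < r | (i < j)%N) (-1)) * VO' q.
Proof.
rewrite /VO /VO' -big_split /=; apply: eq_bigr => i _.
rewrite -big_split /=; apply: eq_bigr => j _.
by rewrite mulN1r opprB.
Qed.

Lemma alt_ord r (q : 'I_r.+2 -> R) :
  \sum_(j < r.+2) (-1) ^+ j * VO (fun k => q (lift j k)) = 0.
Proof.
pose M := \matrix_(i < r.+2, j < r.+2) if i == ord0 then 1 else q j ^+ i.-1.
have d0 : \det M = 0.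
  apply: (@determinant_alternate _ _ _ ord0 (lift ord0 ord0)) => // j.
  by rewrite !mxE /= expr0.
rewrite (expand_det_row _ ord0) in d0.
have E j : M ord0 j * cofactor M ord0 j = (-1) ^+ j * VO' (fun k => q (lift j k)).
  rewrite mxE eqxx mul1r /cofactor add0n; congr (_ * _).
  have -> : row' ord0 (col' j M) = Vandermonde r.+1 (\row_k q (lift j k)).
    apply/matrixP => k l; rewrite !mxE lift0 /=.
    by [].
  by rewrite det_Vandermonde; apply: eq_bigr => i _; apply: eq_bigr => l _; rewrite !mxE.
rewrite (eq_bigr _ (fun j _ => E j)) in d0.
rewrite (eq_bigr (fun j : 'I_r.+2 => (\prod_(i < r.+1) \prod_(l < r.+1 | (i < l)%N) (-1)) *
          ((-1) ^+ j * VO' (fun k => q (lift j k))))); last first.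
  by move=> j _; rewrite VO_VO' mulrCA.
by rewrite -mulr_sumr d0 mulr0.
Qed.

Lemma mono_lt N r (f : 'I_r -> 'I_N) :
  (forall i j : 'I_r, (i < j)%N -> (f i < f j)%N) ->
  forall i j, (f i < f j)%N = (i < j)%N.
Proof.
move=> mono i j; apply/idP/idP; last exact: mono.
apply: contraTT; rewrite -!leqNgt leq_eqVlt => /orP [/eqP e|/mono]; last exact: ltnW.
by have -> : i = j by apply: val_inj.
Qed.

Lemma mono_inj N r (f : 'I_r -> 'I_N) :
  (forall i j : 'I_r, (i < j)%N -> (f i < f j)%N) -> injective f.
Proof.
move=> mono i j e; apply: val_inj; case: (ltngtP i j) => // ij.
  by have := mono _ _ ij; rewrite e ltnn.
by have := mono _ _ ij; rewrite e ltnn.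
Qed.

Lemma VS_img N r (p : 'I_N -> R) (f : 'I_r -> 'I_N) :
  (forall i j : 'I_r, (i < j)%N -> (f i < f j)%N) ->
  VS p (f @: setT) = VO (fun k => p (f k)).
Proof.
move=> mono; have inj := mono_inj mono.
rewrite /VS (big_imset _ (in2W inj)) /=.
apply: eq_big => [i|i _]; first by rewrite in_setT.
rewrite big_mkcondr /= (big_imset _ (in2W inj)) /=.
rewrite [RHS]big_mkcond /=; apply: eq_big => [j|j _]; first by rewrite in_setT.
by rewrite (mono_lt mono).
Qed.

Lemma VS_setU1 N (p : 'I_N -> R) (A : {set 'I_N}) (M : 'I_N) :
  (forall u, u \in A -> (u < M)%N) ->
  VS p (M |: A) = VS p A * \prod_(u in A) (p u - p M).
Proof.
move=> hA; have MA : M \notin A by apply/negP => /hA; rewrite ltnn.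
rewrite /VS big_setU1 //= big1 ?mul1r; last first.
  move=> j /andP [jA]; rewrite in_setU1 in jA.
  by case/orP: jA => [/eqP ->|/hA]; [rewrite ltnn | move=> /ltn_trans h /h; rewrite ltnn].
rewrite -big_split /=; apply: eq_bigr => i iA.
rewrite big_mkcondr big_setU1 //= (hA _ iA) -big_mkcondr mulrC.
by [].
Qed.

Lemma lift_mono r (j : 'I_r.+1) : forall i l : 'I_r, (i < l)%N -> (lift j i < lift j l)%N.
Proof.
move=> i l; rewrite /= /bump.
by case: (leqP j i); case: (leqP j l) => /= ? ? ?; rewrite ?add1n ?add0n ?ltnS // ?(leqW _) //; lia.
Qed.

Lemma GLt N (p : 'I_N -> R) m (t : 'I_m -> 'I_N) :
  (forall i j : 'I_m, (i < j)%N -> (t i < t j)%N) -> (1 < m)%N ->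
  \sum_(j < m) (-1) ^+ j * VS p ((fun l => t (lift j l)) @: setT) = 0.
Proof.
case: m t => [|[|r]] t mono //= _.
rewrite -[RHS](alt_ord (fun k => p (t k))).
apply: eq_bigr => j _; rewrite VS_img //.
by move=> i l il; apply: mono; apply: lift_mono.
Qed.

Lemma enum_val_mono N (S : {set 'I_N}) (i j : 'I_#|S|) :
  (i < j)%N -> (enum_val i < enum_val j)%N.
Proof.
have x0 := enum_val i.
rewrite !(enum_val_nth x0) => ij.
have srt : sorted (fun x y : 'I_N => (x < y)%N) (enum S).
  rewrite /enum_mem -enumT; apply: sorted_filter.
    by move=> x y z; apply: ltn_trans.
  by have := iota_ltn_sorted 0 N; rewrite -val_enum_ord sorted_map.
apply: (sorted_ltn_nth _ x0 srt) => //; first by move=> x y z; apply: ltn_trans.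
  by rewrite inE -cardE.
by rewrite inE -cardE.
Qed.

Lemma card_lt_ord m (j : 'I_m) : #|[set l : 'I_m | (l < j)%N]| = j.
Proof.
have le : (j <= m)%N by apply: ltnW.
have -> : [set l : 'I_m | (l < j)%N] = widen_ord le @: [set: 'I_j].
  apply/setP => x; rewrite inE; apply/idP/imsetP => [xj|[l _ ->]]; last by apply: (ltn_ord l).
  by exists (Ordinal xj) => //; apply: val_inj.
have inj : injective (widen_ord le).
  by move=> x1 y1 e; apply: val_inj; exact: (congr1 (@nat_of_ord _) e).
by rewrite (card_imset _ inj) cardsT card_ord.
Qed.

Lemma GL N (p : 'I_N -> R) (S : {set 'I_N}) : (1 < #|S|)%N ->
  \sum_(k in S) (-1) ^+ #|[set u in S | (u < k)%N]| * VS p (S :\ k) = 0.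
Proof.
move=> h2; rewrite big_enum_val /=.
rewrite -[RHS](GLt p (@enum_val_mono N S) h2).
have Simg : S = enum_val @: [set: 'I_#|S|].
  apply/setP => x; apply/idP/imsetP => [xS|[l _ ->]]; last exact: enum_valP.
  by exists (enum_rank_in xS x) => //; rewrite enum_rankK_in.
have inj : injective (@enum_val _ (mem S)) by apply: enum_val_inj.
apply: eq_bigr => j _; congr (_ ^+ _ * VS p _).
  have -> : [set u in S | (u < enum_val j)%N] =
            enum_val @: [set l : 'I_#|S| | (l < j)%N].
    apply/setP => x; rewrite inE; apply/andP/imsetP => [[xS xj]|[l]].
      exists (enum_rank_in xS x); last by rewrite enum_rankK_in.
      by rewrite inE -(mono_lt (@enum_val_mono N S)) enum_rankK_in.
    rewrite inE => lj ->; split; first exact: enum_valP.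
    by rewrite (mono_lt (@enum_val_mono N S)).
  by rewrite (card_imset _ inj) card_lt_ord.
apply/setP => x; rewrite in_setD1; apply/andP/imsetP => [[xne xS]|[l _ ->]].
  have [k ek] : exists k : 'I_#|S|, x = enum_val k.
    by exists (enum_rank_in xS x); rewrite enum_rankK_in.
  have : j != k by apply: contraNneq xne => ->; rewrite ek.
  case/unlift_some => l kl _; exists l => //; by rewrite ek kl.
split; last exact: enum_valP.
by rewrite (inj_eq inj) eq_sym neq_lift.
Qed.

End Vander.

Section Key.
Variables (K : fieldType) (n : nat).
Local Notation R := {poly {mpoly K[n]}}.

Definition hh : 'I_n -> 'I_n.+2 := widen_ord (leqW (leqnSn n)).
Definition M1 : 'I_n.+2 := locked (Ordinal (leqW (ltnSn n))).
Definition M2 : 'I_n.+2 := locked ord_max.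
Lemma M1E : val M1 = n. Proof. by rewrite /M1 -lock. Qed.
Lemma M2E : val M2 = n.+1. Proof. by rewrite /M2 -lock. Qed.
Definition pp (w : R) (i : 'I_n.+2) : R :=
  oapp (fun k : 'I_n => ('X_k : {mpoly K[n]})%:P) (if val i == n then w else 0)
       (insub (val i)).

Lemma pp_h w k : pp w (hh k) = ('X_k : {mpoly K[n]})%:P.
Proof. by rewrite /pp /= valK. Qed.

Lemma pp_M1 w : pp w M1 = w.
Proof. by rewrite /pp M1E insubN /= ?eqxx // ltnn. Qed.

Lemma pp_M2 w : pp w M2 = 0.
Proof.
rewrite /pp M2E insubN /=; last by rewrite ltnNge leqnSn.
by rewrite eqn_leq ltnn.
Qed.

Lemma hh_inj : injective hh.
Proof. by move=> x y e; apply: val_inj; exact: (congr1 (@nat_of_ord _) e). Qed.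

Lemma hh_lt (A : {set 'I_n}) u : u \in hh @: A -> (u < M1)%N.
Proof. by case/imsetP => k _ ->; rewrite M1E /= ltn_ord. Qed.

Lemma M1_notin (A : {set 'I_n}) : M1 \notin hh @: A.
Proof. by apply/negP => /hh_lt; rewrite ltnn. Qed.

Lemma M2_notin (A : {set 'I_n}) : M2 \notin M1 |: hh @: A.
Proof.
rewrite in_setU1 negb_or; apply/andP; split; first by rewrite -val_eqE M1E M2E eqn_leq ltnn.
by apply/negP => /hh_lt; rewrite M1E M2E ltnNge leqnSn.
Qed.

Lemma M_lt (A : {set 'I_n}) u : u \in M1 |: hh @: A -> (u < M2)%N.
Proof. by rewrite in_setU1 M2E => /orP [/eqP ->|/hh_lt]; rewrite ?M1E // => /ltnW. Qed.

Lemma hh_lt2 (A : {set 'I_n}) u : u \in hh @: A -> (u < M2)%N.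
Proof. by move=> h; apply: (M_lt (A := A)); rewrite in_setU1 h orbT. Qed.

Lemma M12 : M1 != M2.
Proof. by rewrite -val_eqE M1E M2E neq_ltn ltnSn. Qed.

Lemma big_hh (A : {set 'I_n}) (F : 'I_n.+2 -> R) :
  \prod_(u in hh @: A) F u = \prod_(u in A) F (hh u).
Proof. by rewrite big_imset //= => x y _ _; apply: hh_inj. Qed.
Lemma hh_inj2 (A : {set 'I_n}) : {in A &, injective hh}.
Proof. by move=> x y _ _; apply: hh_inj. Qed.

Lemma VS_hh w (A : {set 'I_n}) : VS (pp w) (hh @: A) = (vandermonde K A)%:P.
Proof.
rewrite /VS (big_imset _ (@hh_inj2 A)) /vandermonde rmorph_prod /=; apply: eq_bigr => i iA.
rewrite big_mkcondr /= (big_imset _ (@hh_inj2 A)) rmorph_prod [RHS]big_mkcondr /=.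
apply: eq_bigr => j jA /=; rewrite !pp_h.
by case: ifP => //; rewrite polyCB.
Qed.

Lemma big_hh_pp w (A : {set 'I_n}) (a : R) :
  \prod_(u in hh @: A) (pp w u - a) = \prod_(u in A) (('X_u : {mpoly K[n]})%:P - a).
Proof. by rewrite big_hh; apply: eq_bigr => k _; rewrite pp_h. Qed.

Lemma alg_aux (a b X s : R) : s * s = 1 -> - (s * a) + (s * b + X) = 0 -> a - b = s * X.
Proof.
move=> ss; rewrite addrA => /eqP; rewrite addr_eq0 => /eqP EX.
have -> : X = s * a - s * b by rewrite -[X]opprK -EX opprD opprK.
by rewrite mulrBr !mulrA ss !mul1r.
Qed.

Definition AA w (G : {set 'I_n}) : R :=
  (vandermonde K G)%:P * \prod_(u in G) (('X_u : {mpoly K[n]})%:P - w).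
Definition BB (G : {set 'I_n}) : R := (vandermonde K G * xset K G)%:P.
Definition HH w (T : {set 'I_n}) : R :=
  AA w T * (w * (xset K T)%:P).

Lemma xsetP (A : {set 'I_n}) :
  \prod_(u in A) (('X_u : {mpoly K[n]})%:P - 0 : R) = (xset K A)%:P.
Proof. by rewrite /xset rmorph_prod; apply: eq_bigr => u _; rewrite subr0. Qed.

Lemma key w (G : {set 'I_n}) :
  AA w G - BB G =
  (-1) ^+ #|G| * \sum_(v in G) (-1) ^+ #|[set u in G | (u < v)%N]| * HH w (G :\ v).
Proof.
set S := M2 |: (M1 |: hh @: G).
have cS : (1 < #|S|)%N.
  by rewrite cardsU1 M2_notin cardsU1 M1_notin.
have := GL (pp w) cS.
rewrite big_setU1 ?M2_notin //= big_setU1 ?M1_notin //= (big_imset _ (@hh_inj2 G)) /=.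
have e1 : [set u in S | (u < M2)%N] = M1 |: hh @: G.
  apply/setP => u; have [uin|uout] := boolP (u \in M1 |: hh @: G).
    by rewrite [LHS]inE /S in_setU1 uin orbT /=; exact: (M_lt uin).
  rewrite [LHS]inE /S in_setU1 (negbTE uout) orbF.
  by case: eqP => [->|] //=; rewrite ltnn.
have e2 : [set u in S | (u < M1)%N] = hh @: G.
  apply/setP => u; have [uin|uout] := boolP (u \in hh @: G).
    by rewrite [LHS]inE /S !in_setU1 uin !orbT /=; exact: (hh_lt uin).
  rewrite [LHS]inE /S !in_setU1 (negbTE uout) orbF.
  case: eqP => [->|_] /=; first by rewrite M1E M2E ltnNge leqnSn.
  by case: eqP => [->|_] //=; rewrite ltnn.
have e3 v : [set u in S | (u < hh v)%N] = hh @: [set u in G | (u < v)%N].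
  have vn := ltn_ord v.
  apply/setP => u; rewrite [LHS]inE /S !in_setU1.
  have vn1 : (v <= n)%N by apply: ltnW.
  have vn2 : (v <= n.+1)%N by apply: leqW.
  case: eqP => [->|_] /=.
    rewrite M2E ltnNge vn2 /=; apply/esym/negbTE/negP => /hh_lt.
    by rewrite M1E M2E ltnNge leqnSn.
  case: eqP => [->|_] /=.
    rewrite M1E ltnNge vn1 /=; apply/esym/negbTE/negP => /hh_lt.
    by rewrite ltnn.
  apply/andP/imsetP => [[/imsetP [k kG ->] kv]|[k]].
    by exists k => //; rewrite inE kG.
  by rewrite inE => /andP [kG kv] ->; split => //; apply: imset_f.
rewrite e1 e2 (eq_bigr (fun v : 'I_n => (-1) ^+ #|[set u in G | (u < v)%N]| *
     VS (pp w) (M2 |: (M1 |: hh @: (G :\ v))))); last first.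
  move=> v vG; rewrite e3 (card_imset _ hh_inj); congr (_ * VS _ _).
  have vn := ltn_ord v.
  apply/setP => u; rewrite in_setD1 /S !in_setU1.
  case: (eqVneq u M2) => [->|uM2] /=.
    rewrite andbT; apply/negP => /eqP /(congr1 val); rewrite M2E /= => e.
    by move: vn; rewrite -e ltnNge leqnSn.
  case: (eqVneq u M1) => [->|uM1] /=.
    rewrite andbT; apply/negP => /eqP /(congr1 val); rewrite M1E /= => e.
    by move: vn; rewrite -e ltnn.
  apply/andP/imsetP => [[une /imsetP [k kG ek]]|[k]].
    exists k => //; rewrite ?inE ?kG ?andbT.
    by move: une; rewrite ek (inj_eq hh_inj).
  rewrite !inE => /andP [kv kG] ->; split; last exact: imset_f.
  by rewrite (inj_eq hh_inj).
have e4 : S :\ M1 = M2 |: hh @: G.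
  apply/setP => u; rewrite in_setD1 /S !in_setU1.
  case: (eqVneq u M1) => [->|uM1] /=; last by rewrite ?orbF.
  by rewrite (negbTE M12) (negbTE (M1_notin G)).
rewrite e4 !setU1K ?M2_notin ?M1_notin //.
rewrite cardsU1 M1_notin (card_imset _ hh_inj) /=.
rewrite !VS_setU1; try (by move=> u /hh_lt); try (by move=> u /M_lt); try (by move=> u /hh_lt2).
rewrite !pp_M1 !pp_M2 !VS_hh !big_hh_pp.
rewrite [\sum_(i in G) _](eq_bigr (fun v : 'I_n => (-1) ^+ #|[set u in G | (u < v)%N]| * HH w (G :\ v))); last first.
  move=> v vG; congr (_ * _).
  rewrite VS_setU1; last by move=> u /M_lt.
  rewrite VS_setU1; last by move=> u /hh_lt.
  by rewrite big_setU1 ?M1_notin //= !pp_M1 !pp_M2 VS_hh !big_hh_pp subr0 /HH /AA xsetP mulrA.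
rewrite exprS mulN1r mulNr xsetP /BB rmorphM /= => E; apply: (alg_aux _ E).
by rewrite -exprMn mulrNN mulr1 expr1n.
Qed.

End Key.

Section Aux.
Variables (K : fieldType) (n : nat).
Local Notation R := {poly {mpoly K[n]}}.

Lemma PX (A : {set 'I_n}) (a : 'I_n -> {mpoly K[n]}) k :
  (\prod_(u in A) ((a u)%:P + 'X))`_k =
  \sum_(T : {set 'I_n} | #|T| == k)
     (if T \subset A then \prod_(u in A :\: T) a u else 0).
Proof.
rewrite big_mkcond /=.
rewrite (eq_bigr (fun u => (if u \in A then 'X else 0) +
                           (if u \in A then (a u)%:P else 1))); last first.
  by move=> u _; case: ifP => _; [rewrite addrC | rewrite add0r].
rewrite bigA_distr coef_sum [RHS]big_mkcond /=.
apply: eq_big => // J _.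
have [sub|nsub] := boolP (J \subset A).
  rewrite (bigID (mem J)) /=.
  rewrite (eq_bigr (fun _ => 'X)); last first.
    by move=> i iJ; rewrite iJ (subsetP sub).
  rewrite prodr_const.
  rewrite (eq_bigr (fun i => (if i \in A then a i else 1)%:P)); last first.
    by move=> i iJ; rewrite (negbTE iJ); case: ifP.
  rewrite -rmorph_prod /= -big_mkcondr /=.
  rewrite (eq_bigl (fun i => i \in A :\: J)); last by move=> i; rewrite in_setD.
  rewrite mulrC coefCM coefXn.
  by case: eqP => [->|]; rewrite ?eqxx ?mulr1 // => /eqP; rewrite eq_sym => /negbTE ->; rewrite mulr0.
have [i iJ iA] : exists2 i, i \in J & i \notin A.
  by move/subsetPn: nsub => [i] ? ?; exists i.
rewrite (bigD1 i) //= iJ (negbTE iA) mul0r coef0.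
by case: ifP.
Qed.

Definition hd (k : nat) (P : {mpoly K[n]}) := forall m, m \in msupp P -> mdeg m = k.

Lemma hd0 k : hd k 0. Proof. by move=> m; rewrite msupp0. Qed.

Lemma hdD k P Q : hd k P -> hd k Q -> hd k (P + Q).
Proof. by move=> hP hQ m /msuppD_le; rewrite mem_cat => /orP [/hP|/hQ]. Qed.

Lemma hdB k P Q : hd k P -> hd k Q -> hd k (P - Q).
Proof. by move=> hP hQ m /msuppB_le; rewrite mem_cat => /orP [/hP|/hQ]. Qed.

Lemma hdZ k c P : hd k P -> hd k (c *: P).
Proof. by move=> hP m /msuppZ_le /hP. Qed.

Lemma hdM k1 k2 P Q : hd k1 P -> hd k2 Q -> hd (k1 + k2) (P * Q).
Proof.
move=> hP hQ m /msuppM_le /allpairsP [[b1 b2] /= [h1 h2 ->]].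
by rewrite mdegD hP // hQ.
Qed.

Lemma hd1 : hd 0 (1 : {mpoly K[n]}).
Proof. by move=> m; rewrite msupp1 inE => /eqP ->; rewrite mdeg0. Qed.

Lemma hdX i : hd 1 ('X_i : {mpoly K[n]}).
Proof. by move=> m; rewrite msuppX inE => /eqP ->; rewrite mdeg1. Qed.

Lemma hd_sum k I (r : seq I) (P : pred I) (F : I -> {mpoly K[n]}) :
  (forall i, P i -> hd k (F i)) -> hd k (\sum_(i <- r | P i) F i).
Proof. by move=> h; elim/big_ind: _ => //; [exact: hd0 | exact: hdD]. Qed.

Lemma hd_prod I (r : seq I) (P : pred I) (F : I -> {mpoly K[n]}) (f : I -> nat) :
  (forall i, P i -> hd (f i) (F i)) ->
  hd (\sum_(i <- r | P i) f i)%N (\prod_(i <- r | P i) F i).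
Proof.
move=> h; elim/big_rec2: _ => [|i k p Pi hp]; first exact: hd1.
exact: hdM (h i Pi) hp.
Qed.

Lemma count_pairs (G : {set 'I_n}) :
  (\sum_(i in G) \sum_(j in G | (i < j)%N) 1)%N = 'C(#|G|, 2).
Proof.
rewrite big_enum_val /=.
rewrite (eq_bigr (fun a : 'I_#|G| => \sum_(b < #|G|) (if (a < b)%N then 1 else 0))%N); last first.
  move=> a _; rewrite big_enum_val_cond /= big_mkcond /=; apply: eq_bigr => b _.
  by rewrite (mono_lt (@enum_val_mono _ G)).
rewrite exchange_big /=.
rewrite (eq_bigr (fun b : 'I_#|G| => val b)); last first.
  move=> b _; rewrite -big_mkcond /= sum1dep_card.
  exact: card_lt_ord.
by rewrite -bin2_sum big_mkord.
Qed.

Lemma hd_vander (G : {set 'I_n}) : hd 'C(#|G|, 2) (vandermonde K G).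
Proof.
rewrite -count_pairs /vandermonde; apply: hd_prod => i _.
rewrite -[X in hd X _]big_filter -[X in hd _ X]big_filter.
apply: hd_prod => j _; apply: hdB; exact: hdX.
Qed.

Lemma hd_xset (G : {set 'I_n}) : hd #|G| (xset K G).
Proof. by rewrite -sum1_card /xset; apply: hd_prod => i _; exact: hdX. Qed.

End Aux.

Section Main.
Variables (K : fieldType) (n d : nat) (D : {set {set 'I_n}}) (c : {set 'I_n} -> K).
Hypothesis SC : simplicial_complex D.
Hypothesis HC : is_cycle D d c.
Local Notation R := {poly {mpoly K[n]}}.

Definition phi (x : K) : R := (x%:MP : {mpoly K[n]})%:P.

Lemma chainP G : c G != 0 -> G \in D /\ #|G| = d.+1.
Proof. by case: HC => ch _; apply: ch. Qed.

Lemma closedP (G H : {set 'I_n}) : G \in D -> H \subset G -> H \in D.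
Proof. by case: SC => _ cl _; apply: cl. Qed.

Lemma F_all : F_Delta D d c = \sum_(G : {set 'I_n}) c G *: (xset K G * vandermonde K G).
Proof.
rewrite /F_Delta big_mkcond /=; apply: eq_bigr => G _; case: ifP => // h.
have [->|nz] := eqVneq (c G) 0; first by rewrite scale0r.
by case: (chainP nz) => GD GC; rewrite GD GC eqxx in h.
Qed.

Lemma bdry_zero (T : {set 'I_n}) :
  \sum_(v : 'I_n | v \notin T) (-1) ^+ #|[set u in T | (u < v)%N]| * c (v |: T) = 0.
Proof.
have [/andP [TD /eqP Td]|nT] := boolP ((T \in D) && (#|T| == d)).
  case: HC => _ cyc; transitivity (boundary D c T); last exact: cyc T TD Td.
  rewrite /boundary.
  rewrite [LHS](bigID (fun v => (v |: T) \in D)) /= [X in _ + X]big1 ?addr0 //.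
  move=> v /andP [_ nD]; have [->|nz] := eqVneq (c (v |: T)) 0; first by rewrite mulr0.
  by case: (chainP nz) => VD; rewrite VD in nD.
apply: big1 => v vT; have [->|nz] := eqVneq (c (v |: T)) 0; first by rewrite mulr0.
case: (chainP nz) => VD VC; move: nT; rewrite (closedP VD (subsetUr _ _)) /=.
by move: VC; rewrite cardsU1 vT add1n => -[->]; rewrite eqxx.
Qed.

Lemma phi_sum I (r : seq I) (P : pred I) (F : I -> K) :
  phi (\sum_(i <- r | P i) F i) = \sum_(i <- r | P i) phi (F i).
Proof. by rewrite /phi !raddf_sum. Qed.

Lemma phiM x y : phi (x * y) = phi x * phi y.
Proof. by rewrite /phi !rmorphM. Qed.

Lemma phi_sign k : phi ((-1) ^+ k) = (-1) ^+ k.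
Proof. by rewrite /phi !rmorph_sign. Qed.

Lemma phi0 : phi 0 = 0.
Proof. by rewrite /phi !raddf0. Qed.

Lemma reindex_bd (F : {set 'I_n} -> 'I_n -> R) :
  \sum_(G : {set 'I_n}) \sum_(v in G) F G v =
  \sum_(T : {set 'I_n}) \sum_(v | v \notin T) F (v |: T) v.
Proof.
rewrite (exchange_big_dep xpredT) //= [RHS](exchange_big_dep xpredT) //=.
apply: eq_bigr => v _.
rewrite (reindex_onto (fun T => v |: T) (fun G => G :\ v)) /=; last first.
  by move=> G vG; rewrite setD1K.
apply: eq_bigl => T; rewrite setU11 /=.
have [vT|vT] := boolP (v \in T).
  apply/negbTE/eqP => e; move: vT; rewrite -e; by rewrite setD11.
by rewrite setU1K // eqxx.
Qed.

Lemma comm4 (a b x h : R) : a * (b * (x * h)) = a * h * (x * b).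
Proof. by rewrite -[RHS]mulrA; congr (_ * _); rewrite mulrCA [RHS]mulrC -mulrA. Qed.

Lemma main_poly w : \sum_(G : {set 'I_n}) phi (c G) * (AA w G - BB K G) = 0.
Proof.
rewrite (eq_bigr (fun G : {set 'I_n} => \sum_(v in G) (-1) ^+ d.+1 *
     (phi (c G) * ((-1) ^+ #|[set u in G | (u < v)%N]| * HH w (G :\ v))))); last first.
  move=> G _; rewrite key mulrA mulr_sumr; apply: eq_bigr => v _.
  have [->|nz] := eqVneq (c G) 0; first by rewrite phi0 !mul0r !mulr0.
  by case: (chainP nz) => _ ->; rewrite [phi _ * _]mulrC -mulrA.
rewrite (reindex_bd (fun G v => (-1) ^+ d.+1 *
     (phi (c G) * ((-1) ^+ #|[set u in G | (u < v)%N]| * HH w (G :\ v))))).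
rewrite big1 // => T _.
rewrite (eq_bigr (fun v : 'I_n => (-1) ^+ d.+1 * HH w T * phi ((-1) ^+ #|[set u in T | (u < v)%N]| * c (v |: T)))); last first.
  move=> v vT; rewrite setU1K // phiM phi_sign.
  have -> : [set u in v |: T | (u < v)%N] = [set u in T | (u < v)%N].
    apply/setP => u; rewrite !inE; case: eqP => [->|_] /=; last by [].
    by rewrite ltnn !andbF.
  exact: comm4.
by rewrite -mulr_sumr -phi_sum bdry_zero phi0 mulr0.
Qed.

End Main.

Section Final.
Variables (K : fieldType) (n d : nat) (D : {set {set 'I_n}}) (c : {set 'I_n} -> K).
Hypothesis SC : simplicial_complex D.
Hypothesis HC : is_cycle D d c.
Local Notation F := (F_Delta D d c).

Lemma contract_xset_F (tau : {set 'I_n}) : contract (xset K tau) F =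
  \sum_(G : {set 'I_n}) c G *:
     (if tau \subset G then xset K (G :\: tau) * vandermonde K G else 0).
Proof.
rewrite (F_all HC) contract_sumr; apply: eq_bigr => G _.
by rewrite contractZr contract_xset.
Qed.

Lemma contract_xset_zero (tau : {set 'I_n}) : tau \notin D -> contract (xset K tau) F = 0.
Proof.
move=> tD; rewrite contract_xset_F big1 // => G _.
have [->|nz] := eqVneq (c G) 0; first by rewrite scale0r.
case: (chainP HC nz) => GD _; case: ifP => sub; last by rewrite scaler0.
by move: tD; rewrite (closedP SC GD sub).
Qed.

Lemma contract_mesym k : (0 < k)%N -> contract (mesym n K k) F = 0.
Proof.
move=> k0.
transitivity (\sum_(T : {set 'I_n} | #|T| == k) contract (xset K T) F).
  by rewrite /mesym contract_suml.
under eq_bigr do rewrite contract_xset_F.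
rewrite exchange_big /=.
have E := main_poly SC HC (- 'X).
rewrite (eq_bigr (fun G => phi n (c G) * AA (- 'X) G - phi n (c G) * BB K G)) in E; last first.
  by move=> G _; rewrite mulrBr.
move/eqP: E; rewrite sumrB subr_eq0 => /eqP E.
have := congr1 (fun p : {poly {mpoly K[n]}} => p`_k) E.
rewrite /= !coef_sum.
rewrite [RHS]big1; last first.
  by move=> G _; rewrite /phi /BB -rmorphM coefC -(prednK k0).
move=> E2; rewrite -[RHS]E2; apply: eq_bigr => G _.
rewrite /phi /AA mulrA -rmorphM coefCM.
rewrite (eq_bigr (fun u => ('X_u : {mpoly K[n]})%:P + 'X)); last first.
  by move=> u _; rewrite opprK.
rewrite (PX _ (fun u => 'X_u)) mulr_sumr; apply: eq_bigr => T _.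
rewrite mul_mpolyC; case: ifP => _; last by rewrite !mulr0 scaler0.
by rewrite mulrC -scalerAl.
Qed.

Lemma contract_ideal g : in_ideal (coinv_gens D d) g -> contract g F = 0.
Proof.
case=> s [gens ->]; rewrite contract_suml big_seq big1 // => p ps.
rewrite contractM.
have -> : contract p.2 F = 0.
  case: (gens p ps) => [[tau tD ->]|[k /andP [k1 _] ->]].
    exact: contract_xset_zero.
  exact: contract_mesym.
exact: contractr0.
Qed.

Lemma homog_F : homog_deg 'C(d.+2, 2) F.
Proof.
move=> m; rewrite (F_all HC); move: m.
apply: hd_sum => G _.
have [->|nz] := eqVneq (c G) 0; first by rewrite scale0r; apply: hd0.
apply: hdZ; case: (chainP HC nz) => _ GC.
have -> : 'C(d.+2, 2) = (#|G| + 'C(#|G|, 2))%N by rewrite GC binS bin1 addnC.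
by apply: hdM; [apply: hd_xset | apply: hd_vander].
Qed.

Lemma vander_neq0 (G : {set 'I_n}) : vandermonde K G != 0.
Proof.
rewrite /vandermonde prodf_seq_neq0; apply/allP => i _; apply/implyP => _.
rewrite prodf_seq_neq0; apply/allP => j _; apply/implyP => /andP [_ ij].
apply/eqP => /(congr1 (mcoeff U_(i))); rewrite mcoeffB !mcoeffXU eqxx raddf0.
have -> : (j == i) = false by apply/negbTE; rewrite neq_ltn ij orbT.
by rewrite subr0 => /eqP; rewrite oner_eq0.
Qed.

Lemma F_neq0 G0 : c G0 != 0 -> F != 0.
Proof.
move=> nz0; apply/negP => /eqP F0.
have := contract_xset_F G0; rewrite F0 contractr0.
rewrite (bigD1 G0) //= subxx setDv /xset big_set0 mul1r big1 ?addr0; last first.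
  move=> G nG; have [->|nz] := eqVneq (c G) 0; first by rewrite scale0r.
  case: ifP => sub; last by rewrite scaler0.
  case: (chainP HC nz) => _ GC; case: (chainP HC nz0) => _ GC0.
  have : G0 == G by rewrite eqEcard sub GC GC0 leqnn.
  by rewrite eq_sym (negbTE nG).
move/esym/eqP; rewrite scaler_eq0 (negbTE nz0) /=.
by rewrite (negbTE (vander_neq0 G0)).
Qed.

End Final.

Unset Implicit Arguments.

Theorem theorem4p2 (K : fieldType) (n d : nat) (D : {set {set 'I_n}})
    (c : {set 'I_n} -> K) :
  simplicial_complex D -> has_dim D d ->
  nonzero_homology_class D d c ->
  coinvariant_stress D d 'C(d.+2, 2) (F_Delta D d c) /\
  (exists2 G : {mpoly K[n]}, coinvariant_stress D d 'C(d.+2, 2) G & G != 0).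
Proof.
move=> SC _ [HC HB].
have CS : coinvariant_stress D d 'C(d.+2, 2) (F_Delta D d c).
  split; first exact: homog_F HC.
  by move=> g; apply: contract_ideal.
split => //.
have [/existsP [G0 nz]|/existsPn all0] := boolP [exists G, c G != 0].
  by exists (F_Delta D d c) => //; apply: F_neq0 HC G0 nz.
exfalso; apply: HB; exists (fun _ => 0).
  by move=> G; rewrite eqxx.
move=> G _ _; rewrite /boundary big1; last by move=> v _; rewrite mulr0.
by apply/eqP; rewrite -[c G == 0]negbK; apply: all0.
Qed.
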